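(* An instance $I=(\mathcal{G},k,\ell)$ of Multistage Vertex Cover is a yes-instance if and only if there is a directed path from $s$ to $t$ in the configuration graph of $I$.
   Context: A temporal graph $\mathcal{G}$ is a sequence of layers (static graphs) $(G_1,\dots,G_\tau)$ on a common vertex set $V(\mathcal{G})$. Multistage Vertex Cover: given $\mathcal{G}$ and integers $k\in\mathbb{N}$, $\ell\in\mathbb{N}_0$, where throughout $0<k<|V(\mathcal{G})|$, decide whether there is $(S_1,\dots,S_\tau)$ with each $S_i\subseteq V(\mathcal{G})$ a vertex cover of $G_i$, $|S_i|\le k$, and $|S_i\triangle S_{i+1}|\le\ell$ for $i<\tau$ ($\triangle$ = symmetric difference). The configuration graph of $(\mathcal{G},k,\ell)$ is a directed graph $D$ with vertex set $V_1\uplus\cdots\uplus V_\tau\uplus\{s,t\}$ and a map $\gamma$ from $V_1\uplus\cdots\uplus V_\tau$ to subsets of $V(\mathcal{G})$ of size at most $k$ such that: (i) for every $i\in\{1,\dots,\tau\}$, a set $S$ is a vertex cover of $G_i$ of size exactly $k-1$ or $k$ if and only if there is $v\in V_i$ with $\gamma(v)=S$; (ii) there is an arc from $v$ to $w$ if and only if $v\in V_i$, $w\in V_{i+1}$ for some $i$ and $|\gamma(v)\triangle\gamma(w)|\le\ell$; (iii) there is an arc $(s,v)$ for every $v\in V_1$ and an arc $(v,t)$ for every $v\in V_\tau$ (and no other arcs). *)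

(* Defs.v *)
From mathcomp Require Import all_boot.
Set Implicit Arguments. Unset Strict Implicit. Unset Printing Implicit Defensive.

Definition simple_graph (V : finType) (e : rel V) : Prop :=
  symmetric e /\ irreflexive e.

Definition vertex_cover (V : finType) (e : rel V) (S : {set V}) : Prop :=
  forall u v, e u v -> (u \in S) || (v \in S).

Definition symdiff (V : finType) (A B : {set V}) : {set V} :=
  (A :\: B) :|: (B :\: A).

(* A temporal graph with lifetime tau is given by layers G 1, ..., G tau
   (values of G outside 1..tau are irrelevant). *)
Definition mvc_yes (V : finType) (tau : nat) (G : nat -> rel V) (k l : nat) : Prop :=
  exists S : nat -> {set V},
    (forall i, 1 <= i <= tau -> vertex_cover (G i) (S i) /\ #|S i| <= k) /\
    (forall i, 1 <= i < tau -> #|symdiff (S i) (S i.+1)| <= l).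

(* (N, arc, s, t, lay, gamma) is a configuration graph of (G, k, l):
   the node set is N; nodes other than s and t are the "inner" nodes,
   partitioned into V_1, ..., V_tau by lay (v in V_i iff lay v = i);
   gamma maps inner nodes to vertex subsets of size at most k. *)
Definition config_graph (V : finType) (tau : nat) (G : nat -> rel V) (k l : nat)
  (N : finType) (arc : rel N) (s t : N) (lay : N -> nat) (gamma : N -> {set V})
  : Prop :=
  let inner v := (v != s) && (v != t) in
  [/\ s != t,
      (forall v, inner v -> 1 <= lay v <= tau),
      (forall v, inner v -> #|gamma v| <= k),
      (forall i (S : {set V}), 1 <= i <= tau ->
         (vertex_cover (G i) S /\ ((#|S| == k.-1) || (#|S| == k))) <->
         (exists v, [/\ inner v, lay v = i & gamma v = S])) &
      (forall x y, arc x y <->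
         [\/ x = s /\ inner y /\ lay y = 1,
             inner x /\ y = t /\ lay x = tau
           | [/\ inner x, inner y, lay y = (lay x).+1 &
                 #|symdiff (gamma x) (gamma y)| <= l]])].

(* Main.v *)
Require Import Defs.
From mathcomp Require Import all_boot zify.

Section Pad.
Variable V : finType.

Lemma symdiffC (A B : {set V}) : symdiff A B = symdiff B A.
Proof. by rewrite /symdiff setUC. Qed.

Lemma symdiff_id (A : {set V}) : #|symdiff A A| = 0.
Proof. by rewrite /symdiff setDv setU0 cards0. Qed.

Lemma sd_add (A B : {set V}) y1 y2 : y1 \in A -> y1 \notin B ->
  #|symdiff A (B :|: [set y1; y2])| <= #|symdiff A B|.
Proof.
move=> h1 h2.
have sub : symdiff A (B :|: [set y1; y2]) \subset (symdiff A B :\ y1) :|: [set y2].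
  apply/subsetP => x; rewrite /symdiff !inE.
  case: (x =P y1) => [->|_].
   by rewrite h1 (negbTE h2) /=; case: (y1 == y2); rewrite ?orbT.
  by case: (x == y2); case: (x \in A); case: (x \in B).
apply: (leq_trans (subset_leq_card sub)).
rewrite cardsU cards1 (cardsD1 y1 (symdiff A B)).
have -> : y1 \in symdiff A B by rewrite /symdiff !inE h1 h2.
lia.
Qed.

Lemma min_exists (f : nat -> nat) n : exists j, [/\ j <= n,
  (forall p, p <= n -> f j <= f p) & (forall p, p < j -> f j < f p)].
Proof.
elim: n => [|n [j [hj h1 h2]]].
  exists 0; split => // p; rewrite leqn0 => /eqP -> //.
case: (ltnP (f n.+1) (f j)) => hf.
  exists n.+1; split => // p hp.
    case: (ltnP p n.+1) => hp'; last by have -> : p = n.+1 by lia.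
    by apply: ltnW; apply: (leq_trans hf); apply: h1.
  by apply: (leq_trans hf); apply: h1.
exists j; split => //; first lia.
move=> p hp; case: (ltnP p n.+1) => hp'; first by apply: h1.
by have -> : p = n.+1 by lia.
Qed.

Lemma block_exists (S : nat -> {set V}) j d : exists b, [/\ j <= b <= j + d,
  (forall p, j <= p <= b -> S p = S j) & (b < j + d -> S b.+1 != S j)].
Proof.
elim: d => [|d [b [hb h1 h2]]].
  exists j; split => //; first by rewrite addn0 leqnn.
    move=> p hp; have -> : p = j by lia. by [].
  by rewrite addn0 ltnn.
case: (ltnP b (j + d)) => hbd.
  exists b; split => //; first lia. by move=> _; apply: h2.
case: (S b.+1 =P S j) => hS.
  exists b.+1; split; first lia.
    move=> p hp; case: (ltnP b p) => hpb; last by apply: h1; lia.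
    by have -> : p = b.+1 by lia.
  lia.
exists b; split => //; first lia. by move=> _; apply/eqP.
Qed.

Lemma sum_lt n (f g : nat -> nat) j : j <= n ->
  (forall i, i <= n -> f i <= g i) -> f j < g j ->
  \sum_(i < n.+1) f i < \sum_(i < n.+1) g i.
Proof.
move=> hj hle hlt.
rewrite (bigD1 (Ordinal (n:=n.+1) (m:=j) hj)) //= [X in _ < X](bigD1 (Ordinal (n:=n.+1) (m:=j) hj)) //=.
rewrite -addSn; apply: leq_add => //.
apply: leq_sum => i _; apply: hle; by have := ltn_ord i.
Qed.

Lemma step (k : nat) (hk : k < #|V|) n (S : nat -> {set V}) i0 :
  i0 <= n -> #|S i0| + 2 <= k -> (forall i, i <= n -> #|S i| <= k) ->
  exists S' : nat -> {set V}, [/\ \sum_(i < n.+1) (k - #|S' i|) < \sum_(i < n.+1) (k - #|S i|),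
    forall i, i <= n -> #|S' i| <= k,
    forall i, i <= n -> S i \subset S' i &
    forall i, i < n -> #|symdiff (S' i) (S' i.+1)| <= #|symdiff (S i) (S i.+1)|].
Proof.
move=> hi0 hsz hk'.
have [j [hjn hjmin hjlt]] := min_exists (fun i => #|S i|) n.
have [b [hb hbeq hbne]] := block_exists S j (n - j).
have hbn : b <= n by lia.
have hSj : #|S j| + 2 <= k by have := hjmin _ hi0; lia.
have [y0 hy0] : exists y0, y0 \notin S j.
  have : 0 < #|~: S j| by have := cardsC (S j); lia.
  by rewrite card_gt0 => /set0Pn [y]; rewrite inE => hy; exists y.
have [y1 [hy1a hy1b]] : exists y1, (0 < j -> y1 \in S j.-1) /\ y1 \notin S j.
  case: (posnP j) => hj0; first by exists y0; split => //; rewrite hj0.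
  have hlt := hjlt j.-1 ltac:(lia).
  have : ~~ (S j.-1 \subset S j).
    apply/negP => hsub; have := subset_leq_card hsub; lia.
  case/subsetPn => y hy hny; by exists y.
have [y2 [hy2a hy2b]] : exists y2, (b < n -> y2 \in S b.+1) /\ y2 \notin S j.
  case: (ltnP b n) => hbn'; last by exists y0; split => // ?; lia.
  have hne := hbne ltac:(lia).
  have hge := hjmin b.+1 hbn'.
  have : ~~ (S b.+1 \subset S j).
    apply/negP => hsub; move: hne; rewrite eqEcard hsub hge //.
  case/subsetPn => y hy hny; by exists y.
set Y := S j :|: [set y1; y2].
have hYsz : #|Y| <= k.
  rewrite /Y cardsU cards2; case: (y1 != y2) => /=; lia.
have hYlt : #|S j| < #|Y|.
  apply: proper_card; apply/properP; split; first exact: subsetUl.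
  by exists y1 => //; rewrite !inE eqxx orbT.
pose S' i := if j <= i <= b then Y else S i.
exists S'; split.
- apply: (@sum_lt n (fun i => k - #|S' i|) (fun i => k - #|S i|) j) => // /=.
    move=> i hi; rewrite /S'; case: ifP => // /andP [h1 h2].
    rewrite (hbeq i) ?h1 ?h2 //; lia.
  rewrite /S' leqnn /=.
  rewrite (_ : j <= b) //; last by lia.
  lia.
- move=> i hi; rewrite /S'; case: ifP => _ //; exact: hk'.
- move=> i hi; rewrite /S'; case: ifP => [/andP [h1 h2]|_] //.
  rewrite (hbeq i) ?h1 ?h2 //; exact: subsetUl.
- move=> i hi; rewrite /S'.
  case: (boolP (j <= i <= b)) => /andP hin; case: (boolP (j <= i.+1 <= b)) => /andP hin'.
  + by rewrite symdiff_id.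
  + have hib : i = b by lia.
    subst i. rewrite (hbeq b) ?hb //; last by lia.
    rewrite (symdiffC Y) (symdiffC (S j)) /Y.
    have -> : [set y1; y2] = [set y2; y1] by rewrite setUC.
    by apply: sd_add => //; apply: hy2a.
  + have hij : i.+1 = j by lia.
    rewrite (hbeq i.+1); last by apply/andP.
    rewrite -hij /Y -hij; apply: sd_add => //; last by rewrite hij.
      have -> : i = j.-1 by lia.
      by apply: hy1a; lia.
  + by [].
Qed.

Lemma pad (k : nat) (hk : k < #|V|) n : forall m (S : nat -> {set V}),
  \sum_(i < n.+1) (k - #|S i|) <= m -> (forall i, i <= n -> #|S i| <= k) ->
  exists T : nat -> {set V}, [/\ forall i, i <= n -> S i \subset T i,
     forall i, i <= n -> k.-1 <= #|T i| <= k &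
     forall i, i < n -> #|symdiff (T i) (T i.+1)| <= #|symdiff (S i) (S i.+1)|].
Proof.
elim => [|m IH] S hm hS;
  (case: (boolP [forall i : 'I_n.+1, k.-1 <= #|S i|]) => hall;
   [exists S; split => // i hi; apply/andP; split;
      [exact: (forallP hall (Ordinal (hi : i < n.+1))) | exact: hS] |]);
  move/forallPn: hall => [i0 hi0];
  have hi0n : (i0 : nat) <= n by have := ltn_ord i0.
- have [S' [hlt _ _ _]] := @step k hk n S i0 hi0n ltac:(lia) hS. lia.
- have [S' [hlt hS' hsub hsd]] := @step k hk n S i0 hi0n ltac:(lia) hS.
  have [T [hT1 hT2 hT3]] := IH S' ltac:(lia) hS'.
  exists T; split => //.
    move=> i hi; exact: subset_trans (hsub i hi) (hT1 i hi).
  move=> i hi; exact: leq_trans (hT3 i hi) (hsd i hi).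
Qed.
End Pad.
Theorem lemma14 (V : finType) (tau : nat) (G : nat -> rel V) (k l : nat)
  (N : finType) (arc : rel N) (s t : N) (lay : N -> nat) (gamma : N -> {set V}) :
  0 < tau ->
  (forall i, 1 <= i <= tau -> simple_graph (G i)) ->
  0 < k < #|V| ->
  config_graph tau G k l arc s t lay gamma ->
  (mvc_yes tau G k l <-> connect arc s t).
Proof.
move=> htau _ /andP [hk0 hkV]; rewrite /config_graph => - [hst hlay hgam hi harc].
split.
- move=> [S [hS1 hS2]].
  have hszS : forall i, i <= tau.-1 -> #|S i.+1| <= k.
    move=> i hi'; have := hS1 i.+1 ltac:(lia); case => _; done.
  have [T' [hT1 hT2 hT3]] := @pad V k hkV tau.-1 _ (fun i => S i.+1) (leqnn _) hszS.
  pose T i := T' i.-1.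
  have hTex : forall i, 0 < i <= tau ->
      exists v, [/\ (v != s) && (v != t), lay v = i & gamma v = T i].
    move=> i hir; apply/(hi i (T i) hir); split.
      have [hvc _] := hS1 i hir.
      move=> u w huw; have := hvc u w huw.
      have hsub : S i \subset T i.
        rewrite /T; have := hT1 i.-1 ltac:(lia); by rewrite prednK //; lia.
      by case/orP => h; apply/orP; [left|right]; apply: (subsetP hsub).
    have := hT2 i.-1 ltac:(lia); rewrite -/(T i) => hb.
    have : #|T i| = k.-1 \/ #|T i| = k by lia.
    by case => ->; rewrite eqxx ?orbT.
  pose f i := odflt s [pick v | (v != s) && (v != t) && (lay v == i) && (gamma v == T i)].
  have hf : forall i, 0 < i <= tau -> [/\ (f i != s) && (f i != t), lay (f i) = i & gamma (f i) = T i].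
    move=> i hir; rewrite /f; case: pickP => [v /andP [/andP [h1 /eqP h2] /eqP h3]|hnone] //=.
    have [v [h1 h2 h3]] := hTex i hir.
    by have := hnone v; rewrite h1 h2 h3 !eqxx.
  have hconn : forall i, 0 < i <= tau -> connect arc s (f i).
    elim => [|i IH] hir; first by lia.
    have [a1 a2 a3] := hf i.+1 hir.
    case: (posnP i) => hi0.
      subst i; apply: connect1; apply/harc; constructor 1; split => //.
    apply: connect_trans (IH ltac:(lia)) _; apply: connect1; apply/harc.
    have [b1 b2 b3] := hf i ltac:(lia).
    constructor 3; split => //; first by rewrite a2 b2.
    rewrite a3 b3 /T; have := hT3 i.-1 ltac:(lia); rewrite prednK //= => h.
    apply: leq_trans h _; apply: hS2; lia.
  apply: connect_trans (hconn tau ltac:(lia)) _; apply: connect1; apply/harc.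
  have [a1 a2 a3] := hf tau ltac:(lia).
  by constructor 2.
- move/connectP => [p hp hlast].
  have aux : forall p x, (x != s) && (x != t) -> path arc x p -> t = last x p ->
    exists F : nat -> N, F (lay x) = x /\ forall i, lay x <= i <= tau ->
      [/\ (F i != s) && (F i != t), lay (F i) = i &
          (i < tau -> #|symdiff (gamma (F i)) (gamma (F i.+1))| <= l)].
    elim => [|y q IH] x hx /=.
      by move=> _ htx; move: hx; rewrite htx eqxx andbF.
    move=> /andP [/harc hxy hq] hl.
    case: hxy => [[hxs _]|[_ [hyt hlx]]|[_ hy hly hsd]].
    + by move: hx; rewrite hxs eqxx.
    + exists (fun _ => x); split => // i hir.
      split => //; first by lia.
      by move=> ?; lia.
    + have [F [hF1 hF2]] := IH y hy hq hl.
      exists (fun i => if i == lay x then x else F i); split; first by rewrite eqxx.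
      move=> i hir; case: (i =P lay x) => [->|hne].
        split => //.
        move=> _; rewrite (_ : ((lay x).+1 == lay x) = false); last by apply/negbTE; lia.
        by rewrite -hly hF1.
      have hir' : lay y <= i <= tau by lia.
      have [c1 c2 c3] := hF2 i hir'.
      split => // hit.
      rewrite (_ : (i.+1 == lay x) = false); last by apply/negbTE; lia.
      exact: c3.
  case: p hp hlast => [|y q] /=.
    by move=> _ hts; move: hst; rewrite hts eqxx.
  move=> /andP [/harc hsy hq] hl.
  case: hsy => [[_ [hy hly]]|[hs _]|[hs _ _ _]]; last 2 first.
  + by move: hs; rewrite eqxx.
  + by move: hs; rewrite eqxx.
  have [F [hF1 hF2]] := aux q y hy hq hl.
  exists (fun i => gamma (F i)); split.
    move=> i hir; have [c1 c2 c3] := hF2 i ltac:(lia).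
    have [hvc hsz] := (hi i (gamma (F i)) hir).2 (ex_intro _ (F i) (And3 c1 c2 erefl)).
    split => //; case/orP: hsz => /eqP ->; lia.
  move=> i hir; have [c1 c2 c3] := hF2 i ltac:(lia); apply: c3; lia.
Qed.
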